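(* Let $K$ be a field of characteristic $p>0$, $s\geq1$ an integer, $n=1+p^s$, let $X$ be the $n\times n$ matrix with $1$'s in positions $(i,i+1)$, $1\leq i\leq n-1$, and $0$ elsewhere, and let $K[X]$ be the $K$-subalgebra of $\mathrm{Mat}_n(K)$ generated by $X$. Then every $K$-algebra automorphism $\varphi$ of $K[X]$ is induced by conjugation with some upper triangular matrix $A\in\mathrm{GL}_n(K)$, i.e. $\varphi(Y)=AYA^{-1}$ for all $Y\in K[X]$. For a given $\varphi$ there is a unique such $A$ whose last column has only zero entries except for a $1$ in position $(n,n)$. Any other matrix inducing $\varphi$ has the form $AC$ for some unit $C$ of $K[X]$. *)

(* Defs.v *)
From HB Require Import structures.
From mathcomp Require Import all_boot all_order all_algebra.
Set Implicit Arguments. Unset Strict Implicit. Unset Printing Implicit Defensive.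
Import Order.TTheory GRing.Theory Num.Theory.
Local Open Scope ring_scope.

Definition shiftX (K : fieldType) (m : nat) : 'M[K]_m.+1 :=
  \matrix_(i, j) (if j == i.+1 :> nat then 1 else 0).

Definition in_KX (K : fieldType) (m : nat) (X Y : 'M[K]_m.+1) : Prop :=
  exists q : {poly K}, Y = horner_mx X q.

Definition unit_KX (K : fieldType) (m : nat) (X C : 'M[K]_m.+1) : Prop :=
  in_KX X C /\ exists D, in_KX X D /\ C *m D = 1%:M /\ D *m C = 1%:M.

(* phi (a map on all matrices) restricts to a K-algebra automorphism of K[X]. *)
Definition KX_alg_aut (K : fieldType) (m : nat) (X : 'M[K]_m.+1)
    (phi : 'M[K]_m.+1 -> 'M[K]_m.+1) : Prop :=
  (forall Y, in_KX X Y -> in_KX X (phi Y)) /\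
  (forall Y Z, in_KX X Y -> in_KX X Z -> phi (Y + Z) = phi Y + phi Z) /\
  (forall (a : K) Y, in_KX X Y -> phi (a *: Y) = a *: phi Y) /\
  (forall Y Z, in_KX X Y -> in_KX X Z -> phi (Y *m Z) = phi Y *m phi Z) /\
  phi 1%:M = 1%:M /\
  (forall Y Z, in_KX X Y -> in_KX X Z -> phi Y = phi Z -> Y = Z) /\
  (forall Z, in_KX X Z -> exists Y, in_KX X Y /\ phi Y = Z).

Definition upper_tri (K : fieldType) (m : nat) (A : 'M[K]_m.+1) : Prop :=
  forall i j : 'I_m.+1, (j < i)%N -> A i j = 0.

Definition induces (K : fieldType) (m : nat) (X : 'M[K]_m.+1)
    (phi : 'M[K]_m.+1 -> 'M[K]_m.+1) (A : 'M[K]_m.+1) : Prop :=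
  A \in unitmx /\ forall Y, in_KX X Y -> phi Y = A *m Y *m invmx A.

Definition last_col_en (K : fieldType) (m : nat) (A : 'M[K]_m.+1) : Prop :=
  forall i : 'I_m.+1, A i ord_max = if i == ord_max then 1 else 0.

(* Main.v *)
Require Import Defs.
From HB Require Import structures.
From mathcomp Require Import all_boot all_order all_algebra.
From mathcomp Require Import zify.
Import Order.TTheory GRing.Theory Num.Theory.
Local Open Scope ring_scope.

Lemma coef0X (K : fieldType) (q : {poly K}) k : (q ^+ k)`_0 = q`_0 ^+ k.
Proof.
elim: k => [|k IH]; first by rewrite !expr0 coefC.
by rewrite !exprS coef0M IH.
Qed.

Lemma predlt m (j : 'I_m.+1) : (j.-1 < m.+1)%N.
Proof. exact: leq_ltn_trans (leq_pred j) (ltn_ord j). Qed.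

Lemma mulX_entry (K : fieldType) (m : nat) (M : 'M[K]_m.+1) i (j : 'I_m.+1) :
  (M *m shiftX K m) i j = if (0 < j)%N then M i (inord j.-1) else 0.
Proof.
rewrite mxE; case: (posnP j) => [j0|jp].
  by apply: big1 => l _; rewrite mxE j0 /= mulr0.
rewrite (bigD1 (inord j.-1)) //= big1 ?addr0.
  rewrite mxE inordK ?prednK // ?eqxx ?mulr1 //.
  exact: ltnW (ltn_ord j).
move=> l /eqP hl; rewrite mxE; case: eqP; last by rewrite mulr0.
move=> e; exfalso; apply: hl; apply: val_inj; rewrite /= inordK e //.
exact: ltn_ord l.
Qed.

Lemma Xpow_entry (K : fieldType) (m : nat) k (i j : 'I_m.+1) :
  (shiftX K m ^+ k) i j = if j == (i + k)%N :> nat then 1 else 0.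
Proof.
elim: k i j => [|k IH] i j.
  by rewrite expr0 mxE addn0; case: (i =P j) => [->|h]; rewrite ?eqxx //;
     case: eqP => // e; exfalso; apply: h; apply: val_inj.
rewrite exprSr -mulmxE mulX_entry; case: (posnP j) => [j0|jp].
  by rewrite j0 addnS.
rewrite IH inordK; last exact: predlt.
by rewrite addnS -(inj_eq succn_inj) prednK.
Qed.

Lemma horner_entry (K : fieldType) (m : nat) (q : {poly K}) (i j : 'I_m.+1) :
  (horner_mx (shiftX K m) q) i j = if (i <= j)%N then q`_(j - i) else 0.
Proof.
elim/poly_ind: q i j => [|p c IH] i j.
  by rewrite rmorph0 mxE coef0; case: ifP.
rewrite rmorphD rmorphM /= horner_mx_X horner_mx_C -mulmxE mxE mulX_entry mxE.
rewrite coefD coefMX coefC.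
case: (posnP j) => [j0|jp].
  rewrite add0r -val_eqE /= j0; case: (posnP i) => [->|ip] /=; first by rewrite add0r.
  by rewrite leqNgt ip.
rewrite IH inordK; last exact: predlt.
rewrite -val_eqE /=.
case: (ltngtP i j) => h.
- rewrite mulr0n addr0 -ltnS prednK // h.
  have -> : (j - i == 0)%N = false by rewrite subn_eq0 leqNgt h.
  by rewrite addr0 -!subn1 subnAC.
- by rewrite mulr0n leqNgt (leq_ltn_trans (leq_pred j) h) addr0.
- rewrite mulr1n h subnn /= add0r.
  by rewrite -ltnS prednK // ltnn add0r.
Qed.

Lemma cyc (K : fieldType) m (M N Z : 'M[K]_m.+1) :
  M *m shiftX K m = Z *m M -> N *m shiftX K m = Z *m N ->
  (forall i, M i ord_max = N i ord_max) -> M = N.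
Proof.
move=> hM hN hl.
suff H : forall k i (j : 'I_m.+1), (j + k)%N = m -> M i j = N i j.
  apply/matrixP => i j; apply: (H (m - j)%N); have := ltn_ord j; lia.
elim=> [|k IH] i j hk.
  have -> : j = ord_max by apply: val_inj; rewrite /=; lia.
  exact: hl.
have hj : (j.+1 < m.+1)%N by lia.
pose j' := Ordinal hj.
have e : forall P : 'M[K]_m.+1, P i j = (P *m shiftX K m) i j'.
  by move=> P; rewrite mulX_entry /=; congr (P i _); apply: val_inj; rewrite /= inordK.
rewrite e hM (e N) hN !mxE; apply: eq_bigr => l _; rewrite IH //= addSnnS.
exact: hk.
Qed.

Lemma horner_commX (K : fieldType) m (q : {poly K}) :
  horner_mx (shiftX K m) q *m shiftX K m = shiftX K m *m horner_mx (shiftX K m) q.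
Proof.
transitivity (horner_mx (shiftX K m) (q * 'X)).
  by rewrite rmorphM /= horner_mx_X mulmxE.
by rewrite mulrC rmorphM /= horner_mx_X mulmxE.
Qed.

Lemma comm_inKX (K : fieldType) m (C : 'M[K]_m.+1) :
  C *m shiftX K m = shiftX K m *m C -> in_KX (shiftX K m) C.
Proof.
move=> hC; exists (\poly_(k < m.+1) C (inord (m - k)) ord_max).
apply: (@cyc _ _ _ _ (shiftX K m)) => //; first exact: horner_commX.
move=> i; rewrite horner_entry /= leq_ord coef_poly ltnS leq_subr.
by rewrite subKn ?leq_ord // inord_val.
Qed.

Lemma phi_horner (K : fieldType) m phi :
  KX_alg_aut (shiftX K m) phi ->
  forall q, phi (horner_mx (shiftX K m) q) = horner_mx (phi (shiftX K m)) q.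
Proof.
case=> [hin [hadd [hsc [hmul [h1 _]]]]].
have inK : forall q, in_KX (shiftX K m) (horner_mx (shiftX K m) q) by move=> q; exists q.
have in0 : in_KX (shiftX K m) 0 by exists 0; rewrite rmorph0.
have h0 : phi 0 = 0.
  have : phi 0 = phi 0 + phi 0 by rewrite -hadd ?addr0.
  by move/(congr1 (fun x => x - phi 0)); rewrite subrr addrK => <-.
elim/poly_ind => [|p c IH]; first by rewrite !rmorph0 h0.
rewrite !rmorphD !rmorphM /= !horner_mx_X !horner_mx_C -!mulmxE.
have inX : in_KX (shiftX K m) (shiftX K m) by exists 'X; rewrite horner_mx_X.
have inC : in_KX (shiftX K m) c%:M by exists c%:P; rewrite horner_mx_C.
have in1 : in_KX (shiftX K m) 1%:M by exists 1%:P; rewrite horner_mx_C.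
have inPX : in_KX (shiftX K m) (horner_mx (shiftX K m) p *m shiftX K m).
  by exists (p * 'X); rewrite rmorphM /= horner_mx_X mulmxE.
rewrite hadd // hmul // IH; congr (_ + _).
by rewrite -scalemx1 hsc // h1.
Qed.

Lemma conj_horner (K : fieldType) m (A Y : 'M[K]_m.+1) q :
  A *m shiftX K m = Y *m A -> A *m horner_mx (shiftX K m) q = horner_mx Y q *m A.
Proof.
move=> hA; elim/poly_ind: q => [|p c IH]; first by rewrite !rmorph0 mulmx0 mul0mx.
rewrite !rmorphD !rmorphM /= !horner_mx_X !horner_mx_C -!mulmxE.
by rewrite mulmxDr mulmxDl mulmxA IH -!mulmxA hA scalar_mxC.
Qed.

Theorem main_thm (K : fieldType) (m : nat) (mpos : (0 < m)%N)
    (phi : 'M[K]_m.+1 -> 'M[K]_m.+1)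
    (hphi : KX_alg_aut (shiftX K m) phi) :
  (exists A, upper_tri A /\ induces (shiftX K m) phi A)
  /\ (exists A, [/\ upper_tri A, induces (shiftX K m) phi A, last_col_en A,
        forall B, upper_tri B -> induces (shiftX K m) phi B -> last_col_en B -> B = A &
        forall B, induces (shiftX K m) phi B ->
          exists C, unit_KX (shiftX K m) C /\ B = A *m C]).
Proof.
have hphiH := @phi_horner _ _ _ hphi.

set X := shiftX K m in hphi hphiH *.
have inK q : in_KX X (horner_mx X q) by exists q.
have inX : in_KX X X by exists 'X; rewrite horner_mx_X.
case: hphi => [hin [hadd [hsc [hmul [h1 [hinj _]]]]]].
have h0 : phi 0 = 0 by have := hphiH 0; rewrite !rmorph0.
have [q hq] : in_KX X (phi X) by apply: hin.
set Y := phi X in hq hphiH *.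
have hpow k : phi (X ^+ k) = Y ^+ k.
  by have := hphiH ('X ^+ k); rewrite !rmorphXn /= !horner_mx_X.
have Xn0 : X ^+ m.+1 = 0.
  apply/matrixP => i j; rewrite Xpow_entry mxE; case: eqP => // e.
  by move: (ltn_ord j); rewrite e; lia.
have Yn0 : Y ^+ m.+1 = 0 by rewrite -hpow Xn0.
have Yk k : Y ^+ k = horner_mx X (q ^+ k) by rewrite hq rmorphXn.
have q0 : q`_0 = 0.
  have := congr1 (fun M : 'M[K]_m.+1 => M ord_max ord_max) Yn0.
  rewrite /= Yk horner_entry leqnn subnn coef0X mxE => /eqP.
  by rewrite expf_eq0 => /andP[_ /eqP].
pose r := \poly_(i < size q) q`_i.+1.
have hqr : q = r * 'X.
  apply/polyP => i; rewrite coefMX coef_poly; case: i => [|i] //=.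
  by case: ltnP => // hi; rewrite nth_default //; apply: leqW.
set a := r`_0.
have coefqk k j : (q ^+ k)`_j = if (j < k)%N then 0 else (r ^+ k)`_(j - k).
  by rewrite hqr exprMn coefMXn.
have a0 : a != 0.
  apply/eqP => a0.
  have Ym0 : Y ^+ m = 0.
    apply/matrixP => i j; rewrite Yk horner_entry mxE coefqk.
    case: ifP => // hij; case: ifP => // hlt.
    have -> : (j - i - m = 0)%N by have := ltn_ord j; lia.
    by rewrite coef0X -/a a0 expr0n (gtn_eqF mpos).
  have : X ^+ m = 0.
    apply: hinj; first by exists ('X ^+ m); rewrite rmorphXn /= horner_mx_X.
      by exists 0; rewrite rmorph0.
    by rewrite hpow Ym0 h0.
  move/matrixP => /(_ ord0 ord_max); rewrite Xpow_entry mxE /= add0n eqxx.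
  by move/eqP; rewrite oner_eq0.
pose A : 'M[K]_m.+1 := \matrix_(i, j) (Y ^+ (m - j)) i (@ord_max m).
have Aentry (i j : 'I_m.+1) : A i j = if (m - i < m - j)%N then 0 else (r ^+ (m - j))`_(m - i - (m - j)).
  by rewrite mxE Yk horner_entry /= leq_ord coefqk.
have upA : upper_tri A.
  move=> i j hji; rewrite Aentry ifT //; have := ltn_ord i; lia.
have Adiag (i : 'I_m.+1) : A i i = a ^+ (m - i) by rewrite Aentry ltnn subnn coef0X.
have Aunit : A \in unitmx.
  rewrite unitmxE unitfE -det_tr det_trig.
    by apply/prodf_neq0 => i _; rewrite mxE Adiag expf_neq0.
  apply/forallP => i; apply/forallP => j; apply/implyP => hij.
  by rewrite mxE upA.
have AXYA : A *m X = Y *m A.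
  apply/matrixP => i j.
  have -> : (Y *m A) i j = (Y *m Y ^+ (m - j)) i ord_max.
    by rewrite !mxE; apply: eq_bigr => l _; rewrite mxE.
  rewrite mulmxE -exprS mulX_entry; case: (posnP j) => [j0|jp].
    by rewrite j0 subn0 Yn0 mxE.
  rewrite mxE inordK; last exact: predlt.
  congr ((Y ^+ _) i ord_max); have := ltn_ord j; lia.
have hA : induces X phi A.
  split => // _ [q' ->]; rewrite hphiH.
  by rewrite (@conj_horner _ _ _ _ q' AXYA) mulmxK.
have indXYB B : induces X phi B -> B *m X = Y *m B.
  case=> hBu hB; rewrite [Y]hB //.
  by rewrite mulmxKV.
have lastA : last_col_en A.
  by move=> i; rewrite mxE subnn expr0 mxE; case: eqP.
split; first by exists A.
exists A; split => //.
  move=> B _ hB hlB; apply: (@cyc _ _ _ _ Y) => //; first exact: indXYB.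
  by move=> i; rewrite hlB lastA.
move=> B hB.
pose C := invmx A *m B.
have hCu : C \in unitmx by rewrite unitmx_mul unitmx_inv Aunit (proj1 hB).
have eY : Y = A *m X *m invmx A by rewrite AXYA mulmxK.
have hCX : C *m X = X *m C.
  rewrite /C -mulmxA (indXYB B hB) mulmxA eY.
  by rewrite -!mulmxA mulKmx // !mulmxA.
exists C; split; last by rewrite mulKVmx.
split; first exact: comm_inKX.
exists (invmx C); split; last by split; [exact: mulmxV | exact: mulVmx].
apply: comm_inKX.
have : invmx C *m (C *m X) *m invmx C = invmx C *m (X *m C) *m invmx C by rewrite hCX.
by rewrite mulKmx // mulmxA mulmxK // => ->.
Qed.

Theorem lemma3p3 (K : fieldType) (p s : nat) (hp : p \in [pchar K]) (hs : (1 <= s)%N)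
    (phi : 'M[K]_((p ^ s).+1) -> 'M[K]_((p ^ s).+1))
    (hphi : KX_alg_aut (shiftX K (p ^ s)) phi) :
  (exists A, upper_tri A /\ induces (shiftX K (p ^ s)) phi A)
  /\ (exists A, [/\ upper_tri A, induces (shiftX K (p ^ s)) phi A, last_col_en A,
        forall B, upper_tri B -> induces (shiftX K (p ^ s)) phi B -> last_col_en B -> B = A &
        forall B, induces (shiftX K (p ^ s)) phi B ->
          exists C, unit_KX (shiftX K (p ^ s)) C /\ B = A *m C]).
Proof.
have mpos : (0 < p ^ s)%N by rewrite expn_gt0 (prime_gt0 (pcharf_prime hp)).
exact: (@main_thm K (p ^ s) mpos phi hphi).
Qed.
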